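(* Assume the vector variational inequality defined by $F$ and $K$ is monotone and that $\mathrm{Sol}^w(F,K)$ is bounded and nonempty. Then (a) $\mathrm{Sol}^w(F,K)$ is connected; and (b) the domain of the basic multifunction is all of $\Delta$, i.e., $\mathrm{Sol}(F_\xi,K)\neq\emptyset$ for every $\xi\in\Delta$.
   Context: Let $K\subset\mathbb{R}^n$ be a nonempty closed convex set and $F_1,\dots,F_m:K\to\mathbb{R}^n$ continuous functions; write $F=(F_1,\dots,F_m)$ and $F(x)(u)=(\langle F_1(x),u\rangle,\dots,\langle F_m(x),u\rangle)$. The problem is monotone if each $F_l$ is monotone on $K$: $\langle F_l(y)-F_l(x),y-x\rangle\ge0$ for all $x,y\in K$. Let $\Delta=\{\xi\in\mathbb{R}^m_+:\sum_l\xi_l=1\}$ and $F_\xi=\sum_l\xi_lF_l$. For $G:K\to\mathbb{R}^n$, $\mathrm{Sol}(G,K)=\{x\in K:\langle G(x),y-x\rangle\ge0\ \forall y\in K\}$. The basic multifunction is $S:\Delta\rightrightarrows\mathbb{R}^n$, $S(\xi)=\mathrm{Sol}(F_\xi,K)$. The weak Pareto solution set $\mathrm{Sol}^w(F,K)$ is the set of $x\in K$ such that $F(x)(x-y)\notin\operatorname{int}\mathbb{R}^m_+$ for all $y\in K$. *)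

(* Defs.v *)
From Stdlib Require Import Reals Lra.
From Stdlib Require Fin.
Open Scope R_scope.

Definition vec (n : nat) := Fin.t n -> R.

Fixpoint fsum (n : nat) : (Fin.t n -> R) -> R :=
  match n return (Fin.t n -> R) -> R with
  | O => fun _ => 0
  | S k => fun f => f Fin.F1 + fsum k (fun i => f (Fin.FS i))
  end.

Definition inner {n : nat} (x y : vec n) : R := fsum n (fun i => x i * y i).
Definition vsub {n : nat} (x y : vec n) : vec n := fun i => x i - y i.
Definition vnorm {n : nat} (x : vec n) : R := sqrt (inner x x).
Definition vdist {n : nat} (x y : vec n) : R := vnorm (vsub x y).

Definition is_open {n : nat} (U : vec n -> Prop) : Prop :=
  forall x, U x -> exists eps, 0 < eps /\ forall y, vdist y x < eps -> U y.

Definition is_closed {n : nat} (K : vec n -> Prop) : Prop :=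
  forall x, (forall eps, 0 < eps -> exists y, K y /\ vdist y x < eps) -> K x.

Definition is_convex {n : nat} (K : vec n -> Prop) : Prop :=
  forall x y t, K x -> K y -> 0 <= t <= 1 ->
    K (fun i => t * x i + (1 - t) * y i).

Definition is_bounded {n : nat} (S : vec n -> Prop) : Prop :=
  exists M, forall x, S x -> vnorm x <= M.

Definition is_connected {n : nat} (S : vec n -> Prop) : Prop :=
  forall U V : vec n -> Prop, is_open U -> is_open V ->
    (forall x, S x -> U x \/ V x) ->
    (forall x, S x -> U x -> V x -> False) ->
    (exists x, S x /\ U x) -> (exists x, S x /\ V x) -> False.

Definition continuous_on {n : nat} (K : vec n -> Prop) (G : vec n -> vec n) : Prop :=
  forall x, K x -> forall eps, 0 < eps -> exists delta, 0 < delta /\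
    forall y, K y -> vdist y x < delta -> vdist (G y) (G x) < eps.

Definition monotone_on {n : nat} (K : vec n -> Prop) (G : vec n -> vec n) : Prop :=
  forall x y, K x -> K y -> 0 <= inner (vsub (G y) (G x)) (vsub y x).

Definition Sol {n : nat} (G : vec n -> vec n) (K : vec n -> Prop) (x : vec n) : Prop :=
  K x /\ forall y, K y -> 0 <= inner (G x) (vsub y x).

Definition simplex (m : nat) (xi : Fin.t m -> R) : Prop :=
  (forall l, 0 <= xi l) /\ fsum m xi = 1.

Definition Fxi {n m : nat} (F : Fin.t m -> vec n -> vec n) (xi : Fin.t m -> R)
  : vec n -> vec n :=
  fun x i => fsum m (fun l => xi l * F l x i).

(* Weak Pareto solutions: F(x)(x - y) not in int R^m_+ (= all components > 0) *)
Definition SolW {n m : nat} (F : Fin.t m -> vec n -> vec n) (K : vec n -> Prop)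
  (x : vec n) : Prop :=
  K x /\ forall y, K y -> ~ (forall l, 0 < inner (F l x) (vsub x y)).

(* Main.v *)
Require Import Defs.
From Stdlib Require Import Reals.
From Stdlib Require Fin.
Open Scope R_scope.
From Stdlib Require Import Lra Lia List FunctionalExtensionality Classical.
Import ListNotations.
Open Scope R_scope.

Lemma fsum_ext n (f g : Fin.t n -> R) : (forall i, f i = g i) -> fsum n f = fsum n g.
Proof. induction n; simpl; intros H; auto. rewrite H, (IHn (fun i => f (Fin.FS i)) (fun i => g (Fin.FS i))); auto. Qed.

Lemma fsum_plus n (f g : Fin.t n -> R) : fsum n (fun i => f i + g i) = fsum n f + fsum n g.
Proof. induction n; simpl; [lra|]. rewrite (IHn (fun i => f (Fin.FS i)) (fun i => g (Fin.FS i))). lra. Qed.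

Lemma fsum_scal n c (f : Fin.t n -> R) : fsum n (fun i => c * f i) = c * fsum n f.
Proof. induction n; simpl; [lra|]. rewrite (IHn (fun i => f (Fin.FS i))). lra. Qed.

Lemma fsum_zero n : fsum n (fun _ => 0) = 0.
Proof. induction n; simpl; auto. rewrite IHn; lra. Qed.

Lemma fsum_minus n (f g : Fin.t n -> R) : fsum n (fun i => f i - g i) = fsum n f - fsum n g.
Proof. induction n; simpl; [lra|]. rewrite (IHn (fun i => f (Fin.FS i)) (fun i => g (Fin.FS i))). lra. Qed.

Lemma fsum_le n (f g : Fin.t n -> R) : (forall i, f i <= g i) -> fsum n f <= fsum n g.
Proof. induction n; simpl; intros H; [lra|]. pose proof (IHn (fun i => f (Fin.FS i)) (fun i => g (Fin.FS i)) (fun i => H (Fin.FS i))). pose proof (H Fin.F1). lra. Qed.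

Lemma fsum_nonneg n (f : Fin.t n -> R) : (forall i, 0 <= f i) -> 0 <= fsum n f.
Proof. intros H. rewrite <- (fsum_zero n). apply fsum_le; auto. Qed.

Lemma fsum_comm n m (f : Fin.t n -> Fin.t m -> R) :
  fsum n (fun i => fsum m (fun j => f i j)) = fsum m (fun j => fsum n (fun i => f i j)).
Proof.
  induction n; simpl.
  - rewrite fsum_zero; auto.
  - rewrite IHn. rewrite <- fsum_plus. auto.
Qed.

Lemma fsum_abs n (f : Fin.t n -> R) : Rabs (fsum n f) <= fsum n (fun i => Rabs (f i)).
Proof. induction n; simpl. rewrite Rabs_R0; lra.
  eapply Rle_trans; [apply Rabs_triang|]. specialize (IHn (fun i => f (Fin.FS i))). lra. Qed.

Lemma fsum_simplex_pos m (xi c : Fin.t m -> R) :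
  (forall l, 0 <= xi l) -> fsum m xi = 1 -> (forall l, 0 < c l) ->
  0 < fsum m (fun l => xi l * c l).
Proof.
  induction m; simpl; intros H0 H1 H2; [lra|].
  destruct (Req_dec (xi Fin.F1) 0) as [E|E].
  - rewrite E in *. specialize (IHm (fun i => xi (Fin.FS i)) (fun i => c (Fin.FS i))).
    assert (0 < fsum m (fun i => xi (Fin.FS i) * c (Fin.FS i))) by (apply IHm; auto; lra). lra.
  - assert (0 < xi Fin.F1) by (pose proof (H0 Fin.F1); lra).
    assert (0 < xi Fin.F1 * c Fin.F1) by (apply Rmult_lt_0_compat; auto).
    assert (0 <= fsum m (fun i => xi (Fin.FS i) * c (Fin.FS i))).
    { apply fsum_nonneg. intros i. apply Rmult_le_pos; auto. left; auto. }
    lra.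
Qed.

Lemma inner_sym n (x y : vec n) : inner x y = inner y x.
Proof. unfold inner. apply fsum_ext. intros; ring. Qed.

Lemma inner_lin_l n a b (x y z : vec n) :
  inner (fun i => a * x i + b * y i) z = a * inner x z + b * inner y z.
Proof. unfold inner. rewrite <- !fsum_scal, <- fsum_plus. apply fsum_ext; intros; ring. Qed.

Lemma inner_lin_r n a b (x y z : vec n) :
  inner z (fun i => a * x i + b * y i) = a * inner z x + b * inner z y.
Proof. rewrite inner_sym, inner_lin_l, (inner_sym _ x), (inner_sym _ y); auto. Qed.

Lemma inner_sub_l n (x y z : vec n) : inner (vsub x y) z = inner x z - inner y z.
Proof. unfold inner, vsub. rewrite <- fsum_minus. apply fsum_ext; intros; ring. Qed.

Lemma inner_sub_r n (x y z : vec n) : inner z (vsub x y) = inner z x - inner z y.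
Proof. rewrite inner_sym, inner_sub_l, (inner_sym _ x), (inner_sym _ y); auto. Qed.

Lemma inner_ext n (x x' y y' : vec n) : (forall i, x i = x' i) -> (forall i, y i = y' i) ->
  inner x y = inner x' y'.
Proof. intros H1 H2. unfold inner. apply fsum_ext. intros; rewrite H1, H2; auto. Qed.

Lemma inner_self_nonneg n (x : vec n) : 0 <= inner x x.
Proof. unfold inner. apply fsum_nonneg. intros; nra. Qed.

Lemma inner_zero_l n (y : vec n) : inner (fun _ => 0) y = 0.
Proof. unfold inner. rewrite (fsum_ext _ _ (fun _ => 0)); [apply fsum_zero| intros; ring]. Qed.

Lemma CS2 n (x y : vec n) : (inner x y)^2 <= inner x x * inner y y.
Proof.
  set (a := inner x x); set (b := inner x y); set (c := inner y y).
  assert (Q : forall t, 0 <= a + 2 * b * t + c * t^2).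
  { intros t. pose proof (inner_self_nonneg n (fun i => 1 * x i + t * y i)).
    rewrite inner_lin_l, !inner_lin_r in H. fold a b c in H. rewrite (inner_sym _ y x) in H. fold b in H. nra. }
  assert (0 <= a) by apply inner_self_nonneg. assert (0 <= c) by apply inner_self_nonneg.
  destruct (Req_dec c 0) as [E|E].
  - destruct (Req_dec b 0) as [Eb|Eb].
    + rewrite Eb, E. nra.
    + pose proof (Q (-(a+1)/(2*b))). rewrite E in H1.
      assert (2 * b * (-(a+1)/(2*b)) = -(a+1)) by (field; auto). nra.
  - assert (0 < c) by lra. pose proof (Q (-b/c)).
    assert (a + 2 * b * (-b/c) + c * (-b/c)^2 = a - b^2/c) by (field; lra).
    rewrite H3 in H2. assert (b^2/c <= a) by lra.
    apply Rmult_le_compat_r with (r:=c) in H4; [|lra].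
    unfold Rdiv in H4. rewrite Rmult_assoc, Rinv_l in H4; lra.
Qed.

Lemma vnorm_nonneg n (x : vec n) : 0 <= vnorm x.
Proof. unfold vnorm. apply sqrt_pos. Qed.

Lemma vnorm_sq n (x : vec n) : vnorm x * vnorm x = inner x x.
Proof. unfold vnorm. apply sqrt_sqrt, inner_self_nonneg. Qed.

Lemma CS n (x y : vec n) : Rabs (inner x y) <= vnorm x * vnorm y.
Proof.
  pose proof (CS2 n x y). pose proof (vnorm_sq n x). pose proof (vnorm_sq n y).
  pose proof (vnorm_nonneg n x). pose proof (vnorm_nonneg n y).
  apply Rsqr_incr_0_var.
  - rewrite <- Rsqr_abs. unfold Rsqr. simpl in H. rewrite <- H0, <- H1 in H. nra.
  - apply Rmult_le_pos; auto.
Qed.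

Lemma inner_le n (x y : vec n) : inner x y <= vnorm x * vnorm y.
Proof. pose proof (CS n x y). pose proof (Rle_abs (inner x y)). lra. Qed.

Lemma sq_le_norm n (x : vec n) r : 0 <= r -> inner x x <= r * r -> vnorm x <= r.
Proof. intros H1 H2. rewrite <- vnorm_sq in H2. pose proof (vnorm_nonneg n x). nra. Qed.

Lemma vnorm_triang n (x y : vec n) : vnorm (fun i => x i + y i) <= vnorm x + vnorm y.
Proof.
  apply sq_le_norm. pose proof (vnorm_nonneg n x); pose proof (vnorm_nonneg n y); lra.
  replace (fun i => x i + y i) with (fun i => 1 * x i + 1 * y i) by (apply functional_extensionality; intros; ring).
  rewrite inner_lin_l, !inner_lin_r. rewrite (inner_sym _ y x).
  pose proof (inner_le n x y). rewrite <- !vnorm_sq. nra.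
Qed.


Lemma vnorm_ext n (x y : vec n) : (forall i, x i = y i) -> vnorm x = vnorm y.
Proof. intros H. unfold vnorm. f_equal. apply inner_ext; auto. Qed.

Lemma vnorm_scal n c (x : vec n) : vnorm (fun i => c * x i) = Rabs c * vnorm x.
Proof.
  unfold vnorm. replace (inner (fun i => c * x i) (fun i => c * x i)) with (Rsqr c * inner x x).
  - rewrite sqrt_mult_alt by apply Rle_0_sqr. rewrite sqrt_Rsqr_abs; auto.
  - unfold inner, Rsqr. rewrite <- fsum_scal. apply fsum_ext; intros; ring.
Qed.

Lemma vnorm_lin n a b (x y : vec n) : vnorm (fun i => a * x i + b * y i) <= Rabs a * vnorm x + Rabs b * vnorm y.
Proof.
  eapply Rle_trans; [apply (vnorm_triang n (fun i => a * x i) (fun i => b * y i))|].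
  rewrite !vnorm_scal. lra.
Qed.

Lemma fsum_ge_term n (f : Fin.t n -> R) i : (forall j, 0 <= f j) -> f i <= fsum n f.
Proof.
  induction n; [inversion i|]. intros H.
  apply (Fin.caseS' i (fun i => f i <= fsum (S n) f)); simpl.
  - pose proof (fsum_nonneg n (fun j => f (Fin.FS j)) (fun j => H (Fin.FS j))). lra.
  - intros p. pose proof (IHn (fun j => f (Fin.FS j)) p (fun j => H (Fin.FS j))). pose proof (H Fin.F1). lra.
Qed.

Lemma comp_le_norm n (x : vec n) i : Rabs (x i) <= vnorm x.
Proof.
  unfold vnorm. rewrite <- sqrt_Rsqr_abs. apply sqrt_le_1_alt. unfold inner.
  apply (fsum_ge_term n (fun i => x i * x i)). intros; nra.
Qed.

Lemma vdist_sym n (x y : vec n) : vdist x y = vdist y x.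
Proof. unfold vdist. replace (vsub y x) with (fun i => -1 * vsub x y i).
  rewrite vnorm_scal, Rabs_left by lra; ring.
  apply functional_extensionality; intros; unfold vsub; ring. Qed.

Lemma vdist_triang n (x y z : vec n) : vdist x z <= vdist x y + vdist y z.
Proof. unfold vdist. eapply Rle_trans; [|apply vnorm_triang]. right. apply vnorm_ext. intros; unfold vsub; ring. Qed.

Lemma vdist_nonneg n (x y : vec n) : 0 <= vdist x y.
Proof. apply vnorm_nonneg. Qed.

Lemma vdist_refl n (x : vec n) : vdist x x = 0.
Proof. unfold vdist. replace (vsub x x) with (fun i : Fin.t n => 0 * x i).
  rewrite vnorm_scal, Rabs_R0; ring. apply functional_extensionality; intros; unfold vsub; ring. Qed.

Lemma norm_le_dist n (x y : vec n) : vnorm x <= vnorm y + vdist x y.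
Proof. unfold vdist. eapply Rle_trans; [|apply vnorm_triang]. right. apply vnorm_ext. intros; unfold vsub; ring. Qed.

Lemma inner_cont n (a x y : vec n) : Rabs (inner a x - inner a y) <= vnorm a * vdist x y.
Proof. rewrite <- inner_sub_r. apply CS. Qed.

Lemma vdist_comb n t (x y : vec n) : vdist (fun i => t * x i + (1 - t) * y i) y = Rabs t * vdist x y.
Proof. unfold vdist. rewrite <- vnorm_scal. apply vnorm_ext. intros; unfold vsub; ring. Qed.

Lemma norm_comb n t (x y : vec n) : 0 <= t <= 1 ->
  vnorm (fun i => t * x i + (1 - t) * y i) <= t * vnorm x + (1 - t) * vnorm y.
Proof. intros H. eapply Rle_trans; [apply vnorm_lin|]. rewrite !Rabs_pos_eq by lra. lra. Qed.

Lemma Rabs_le_inv a b : Rabs a <= b -> -b <= a <= b.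
Proof. unfold Rabs; destruct (Rcase_abs a); lra. Qed.

Definition vcons {n} (t : R) (v : vec n) : vec (S n) := fun i => Fin.caseS' i (fun _ => R) t v.
Definition vtl {n} (x : vec (S n)) : vec n := fun i => x (Fin.FS i).

Lemma vcons_eta n (x : vec (S n)) : vcons (x Fin.F1) (vtl x) = x.
Proof. apply functional_extensionality. intros i. apply (Fin.caseS' i (fun i => vcons (x Fin.F1) (vtl x) i = x i)); reflexivity. Qed.

Lemma vdist_cons_same n t (w v : vec n) : vdist (vcons t w) (vcons t v) = vdist w v.
Proof. unfold vdist, vnorm, inner, vsub. simpl. f_equal. ring. Qed.

Lemma vdist_cons_le n s t (w v : vec n) : vdist (vcons s w) (vcons t v) <= Rabs (s - t) + vdist w v.
Proof.
  apply sq_le_norm. pose proof (Rabs_pos (s - t)); pose proof (vdist_nonneg n w v); lra.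
  pose proof (vnorm_sq n (vsub w v)). fold (vdist w v) in H.
  assert (E : inner (vsub (vcons s w) (vcons t v)) (vsub (vcons s w) (vcons t v)) = (s - t) * (s - t) + inner (vsub w v) (vsub w v)) by reflexivity.
  rewrite E, <- H. pose proof (Rabs_pos (s - t)); pose proof (vdist_nonneg n w v).
  assert ((s - t) * (s - t) = Rabs (s - t) * Rabs (s - t)).
  { rewrite <- Rabs_mult; symmetry; apply Rabs_pos_eq; apply Rle_0_sqr. }
  unfold vdist in *. nra.
Qed.

Definition box n (R0 : R) (x : vec n) := forall i, Rabs (x i) <= R0.

Lemma closed_compl n (A : vec n -> Prop) x : is_closed A -> ~ A x ->
  exists eps, 0 < eps /\ forall y, vdist y x < eps -> ~ A y.
Proof.
  intros HA Hx. apply NNPP. intros C. apply Hx, HA. intros eps Heps.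
  apply NNPP. intros C2. apply C. exists eps. split; auto. intros y Hy Ay. apply C2. exists y; auto.
Qed.

Lemma closed_compl_open n (A : vec n -> Prop) : is_closed A -> is_open (fun x => ~ A x).
Proof. intros HA x Hx. apply closed_compl; auto. Qed.

Fixpoint minpos {J} (l : list (J * R)) : R :=
  match l with
  | [] => 1
  | p :: l' => if Rlt_dec 0 (snd p) then Rmin (snd p) (minpos l') else minpos l'
  end.

Lemma minpos_pos {J} (l : list (J * R)) : 0 < minpos l.
Proof. induction l; simpl. lra. destruct (Rlt_dec 0 (snd a)); auto. apply Rmin_glb_lt; auto. Qed.

Lemma minpos_le {J} (l : list (J * R)) p : In p l -> 0 < snd p -> minpos l <= snd p.
Proof.
  induction l; simpl; intros H1 H2; [contradiction|]. destruct H1 as [E|H1].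
  - subst a. destruct (Rlt_dec 0 (snd p)); [apply Rmin_l|lra].
  - destruct (Rlt_dec 0 (snd a)); [|auto]. eapply Rle_trans; [apply Rmin_r|auto].
Qed.

Theorem HB n : forall (R0 : R) (J : Type) (U : J -> vec n -> Prop), (forall j, is_open (U j)) ->
  (forall x, box n R0 x -> exists j, U j x) ->
  exists l : list J, forall x, box n R0 x -> exists j, In j l /\ U j x.
Proof.
  induction n as [|n IH]; intros R0 J U Uo Ucov.
  - set (x0 := (fun i => Fin.case0 (fun _ => R) i) : vec 0).
    destruct (Ucov x0) as [j Hj]. { intros i; inversion i. }
    exists [j]. intros x _. exists j. split; [left; auto|].
    destruct (Uo j x0 Hj) as [eps [He Hy]]. apply Hy.
    unfold vdist, vnorm, inner. simpl. rewrite sqrt_0. auto.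
  - destruct (Rlt_dec R0 0) as [Rneg|Rpos].
    { exists []. intros x Hx. pose proof (Hx Fin.F1). pose proof (Rabs_pos (x Fin.F1)). lra. }
    set (covered := fun s => exists l : list J, forall x, box (S n) R0 x -> x Fin.F1 <= s -> exists j, In j l /\ U j x).
    assert (Hlow : forall s, s < - R0 -> covered s).
    { intros s Hs. exists []. intros x Hx Hs2. pose proof (Hx Fin.F1). apply Rabs_le_inv in H. lra. }
    set (E := fun s => s <= R0 /\ covered s).
    destruct (completeness E) as [t [Hub Hlub]].
    { exists R0. intros s [Hs _]; auto. }
    { exists (-R0-1). split; [lra|apply Hlow; lra]. }
    assert (HtR : t <= R0). { apply Hlub. intros s [Hs _]; auto. }
    assert (HtL : - R0 <= t).
    { destruct (Rle_dec (-R0) t); auto. exfalso. assert (E ((t - R0)/2)) by (split; [lra|apply Hlow; lra]).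
      apply Hub in H. lra. }
    set (W := fun (p : J * R) (v : vec n) => 0 < snd p /\ exists eta, 0 < eta /\
                forall s w, Rabs (s - t) < snd p -> vdist w v < eta -> U (fst p) (vcons s w)).
    destruct (IH R0 (J * R)%type W) as [l' Hl'].
    { intros p v [Hp [eta [Heta Hv]]]. exists (eta/2). split; [lra|]. intros v' Hv'.
      split; auto. exists (eta/2). split; [lra|]. intros s w Hs Hw. apply Hv; auto.
      pose proof (vdist_triang n w v' v). lra. }
    { intros v Hv. assert (Hb : box (S n) R0 (vcons t v)).
      { intros i. apply (Fin.caseS' i (fun i => Rabs (vcons t v i) <= R0)); simpl.
        apply Rabs_le; lra. intros p; apply Hv. }
      destruct (Ucov _ Hb) as [j Hj]. destruct (Uo j _ Hj) as [eps [He Hy]].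
      exists (j, eps/2). split; simpl; [lra|]. exists (eps/2). split; [lra|]. intros s w Hs Hw.
      apply Hy. pose proof (vdist_cons_le n s t w v). lra. }
    set (d0 := minpos l'). assert (Hd0 : 0 < d0) by apply minpos_pos.
    assert (Tube : forall x, box (S n) R0 x -> Rabs (x Fin.F1 - t) < d0 -> exists j, In j (map fst l') /\ U j x).
    { intros x Hx Hxt. destruct (Hl' (vtl x)) as [p [Hp [Hp0 [eta [Heta Hw]]]]].
      { intros i. apply Hx. }
      exists (fst p). split; [apply in_map; auto|]. rewrite <- vcons_eta. apply Hw.
      pose proof (minpos_le l' p Hp Hp0). fold d0 in H. lra. rewrite vdist_refl; auto. }
    assert (Hs : exists s, E s /\ t - d0 < s).
    { apply NNPP. intros C. assert (t <= t - d0); [|lra]. apply Hlub. intros s Hs.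
      destruct (Rle_dec s (t - d0)); auto. exfalso. apply C. exists s. split; auto. lra. }
    destruct Hs as [s [[HsR [l1 Hl1]] Hst]].
    assert (Hcov : covered (Rmin (t + d0/2) R0)).
    { exists (l1 ++ map fst l'). intros x Hx Hxs.
      destruct (Rle_dec (x Fin.F1) s) as [Hle|Hgt].
      - destruct (Hl1 x Hx Hle) as [j [Hj1 Hj2]]. exists j. split; auto. apply in_or_app; auto.
      - assert (x Fin.F1 <= t + d0/2) by (eapply Rle_trans; [apply Hxs|apply Rmin_l]).
        destruct (Tube x Hx) as [j [Hj1 Hj2]]. apply Rabs_def1; lra.
        exists j. split; auto. apply in_or_app; auto. }
    destruct (Rle_dec R0 (t + d0/2)) as [Hfin|Hnf].
    + rewrite Rmin_right in Hcov by lra. destruct Hcov as [l Hl]. exists l. intros x Hx.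
      apply Hl; auto. pose proof (Hx Fin.F1). apply Rabs_le_inv in H. lra.
    + rewrite Rmin_left in Hcov by lra. assert (E (t + d0/2)) by (split; [lra|auto]).
      apply Hub in H. lra.
Qed.

Theorem FIP n R0 (B : vec n -> Prop) (J : Type) (A : J -> vec n -> Prop) :
  is_closed B -> (forall x, B x -> box n R0 x) -> (forall j, is_closed (A j)) ->
  (forall l : list J, exists x, B x /\ forall j, In j l -> A j x) ->
  exists x, B x /\ forall j, A j x.
Proof.
  intros HBc Hbox HA Hfin. apply NNPP. intros C.
  set (U := fun (o : option J) x => match o with None => ~ B x | Some j => ~ A j x end).
  destruct (HB n R0 (option J) U) as [lo Hlo].
  { intros [j|]; simpl; apply closed_compl_open; auto. }
  { intros x _. destruct (classic (B x)) as [Bx|Bx].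
    - assert (exists j, ~ A j x). { apply NNPP; intros C2. apply C. exists x. split; auto. intros j. apply NNPP. intros C3. apply C2. exists j; auto. }
      destruct H as [j Hj]. exists (Some j); auto.
    - exists None; auto. }
  destruct (Hfin (flat_map (fun o => match o with Some j => [j] | None => [] end) lo)) as [x [Bx Hx]].
  destruct (Hlo x (Hbox x Bx)) as [[j|] [Ho Hu]]; simpl in Hu.
  - apply Hu, Hx. apply in_flat_map. exists (Some j). split; auto. left; auto.
  - auto.
Qed.

Lemma fsum_opp n (f : Fin.t n -> R) : fsum n (fun i => - f i) = - fsum n f.
Proof. induction n; simpl. ring. rewrite (IHn (fun i => f (Fin.FS i))). ring. Qed.

Lemma fsum_split k p (h : Fin.t (k + p) -> R) :
  fsum (k + p) h = fsum k (fun i => h (Fin.L p i)) + fsum p (fun j => h (Fin.R k j)).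
Proof.
  induction k; simpl. rewrite Rplus_0_l; reflexivity.
  rewrite (IHk (fun i => h (Fin.FS i))). rewrite Rplus_assoc. reflexivity.
Qed.

Fixpoint fcat {A} k p : (Fin.t k -> A) -> (Fin.t p -> A) -> Fin.t (k + p) -> A :=
  match k return (Fin.t k -> A) -> (Fin.t p -> A) -> Fin.t (k + p) -> A with
  | 0 => fun _ g => g
  | S k' => fun f g => fun i => Fin.caseS' i (fun _ => A) (f Fin.F1) (fcat k' p (fun i => f (Fin.FS i)) g)
  end.

Lemma fcat_L {A} k p (f : Fin.t k -> A) g i : fcat k p f g (Fin.L p i) = f i.
Proof.
  induction k; [inversion i|].
  apply (Fin.caseS' i (fun i => fcat (S k) p f g (Fin.L p i) = f i)); simpl; auto.
  intros q. apply (IHk (fun i => f (Fin.FS i))).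
Qed.

Lemma fcat_R {A} k p (f : Fin.t k -> A) g j : fcat k p f g (Fin.R k j) = g j.
Proof. induction k; simpl; auto. Qed.

Lemma fin_split_all k p (P : Fin.t (k + p) -> Prop) :
  (forall i, P (Fin.L p i)) -> (forall j, P (Fin.R k j)) -> forall i, P i.
Proof.
  induction k; simpl; intros H1 H2 i; auto.
  apply (Fin.caseS' i P).
  - apply (H1 Fin.F1).
  - intros q. apply (IHk (fun q => P (Fin.FS q))); auto.
    intros i0. apply (H1 (Fin.FS i0)).
Qed.

Definition fcons {A} {k} (a : A) (f : Fin.t k -> A) : Fin.t (S k) -> A :=
  fun i => Fin.caseS' i (fun _ => A) a f.

Lemma fcons_all {A} k (a : A) f (P : A -> Prop) : P a -> (forall i, P (f i)) -> forall i : Fin.t (S k), P (fcons a f i).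
Proof. intros H1 H2 i. apply (Fin.caseS' i (fun i => P (fcons a f i))); simpl; auto. Qed.

Lemma inner_axpy_l n r (u w x : vec n) : inner (fun c => u c - r * w c) x = inner u x - r * inner w x.
Proof. unfold inner. rewrite <- fsum_scal, <- fsum_minus. apply fsum_ext; intros; ring. Qed.

Lemma inner_axpy_r n r (u w x : vec n) : inner x (fun c => u c - r * w c) = inner x u - r * inner x w.
Proof. rewrite inner_sym, inner_axpy_l, (inner_sym _ u), (inner_sym _ w). auto. Qed.

Theorem farkas d : forall k (a : Fin.t k -> vec d) (b : vec d),
  (exists x, (forall i, inner (a i) x <= 0) /\ 0 < inner b x) \/
  (exists lam : Fin.t k -> R, (forall i, 0 <= lam i) /\ forall c, b c = fsum k (fun i => lam i * a i c)).
Proof.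
  induction k as [|k IH]; intros a b.
  - destruct (Rlt_dec 0 (inner b b)) as [Hp|Hp].
    + left. exists b. split; auto. intros i; inversion i.
    + right. exists (fun _ => 0). split; [intros; lra|]. intros c. simpl.
      pose proof (fsum_ge_term d (fun i => b i * b i) c). unfold inner in Hp.
      assert (b c * b c <= 0). { apply Rle_trans with (fsum d (fun i => b i * b i)); [apply H; intros; nra| lra]. }
      nra.
  - set (a0 := a Fin.F1). set (a' := fun i => a (Fin.FS i)).
    destruct (IH a' b) as [[x0 [Hx0 Hbx0]] | [lam [Hl Hb]]].
    + destruct (Rle_dec (inner a0 x0) 0) as [Ha0|Ha0].
      * left. exists x0. split; auto. intros i. apply (Fin.caseS' i (fun i => inner (a i) x0 <= 0)); auto.
      * set (al := inner a0 x0). assert (Hal : 0 < al) by (unfold al; lra).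
        set (a'' := fun i c => a' i c - (inner (a' i) x0 / al) * a0 c).
        set (b'' := fun c => b c - (inner b x0 / al) * a0 c).
        destruct (IH a'' b'') as [[x [Hx Hbx]] | [lam [Hl Hb]]].
        -- left. set (x' := fun c => x c - (inner a0 x / al) * x0 c). exists x'.
           assert (E : forall u, inner u x' = inner u x - (inner a0 x / al) * inner u x0).
           { intros u. unfold x'. apply inner_axpy_r. }
           split.
           ++ intros i. apply (Fin.caseS' i (fun i => inner (a i) x' <= 0)).
              ** fold a0. rewrite E. fold al. field_simplify; lra.
              ** intros p. rewrite E. specialize (Hx p). unfold a'' in Hx. rewrite inner_axpy_l in Hx.
                 fold (a' p). replace (inner a0 x / al * inner (a' p) x0) with (inner (a' p) x0 / al * inner a0 x) by (field; lra).
                 auto.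
           ++ rewrite E. unfold b'' in Hbx. rewrite inner_axpy_l in Hbx.
              replace (inner a0 x / al * inner b x0) with (inner b x0 / al * inner a0 x) by (field; lra). auto.
        -- right. set (mu := (inner b x0 - fsum k (fun i => lam i * inner (a' i) x0)) / al).
           exists (fcons mu lam). split.
           ++ apply fcons_all; auto. unfold mu, Rdiv. apply Rmult_le_pos; [|left; apply Rinv_0_lt_compat; lra].
              assert (fsum k (fun i => lam i * inner (a' i) x0) <= 0).
              { rewrite <- (fsum_zero k). apply fsum_le. intros i. specialize (Hx0 i). specialize (Hl i). nra. }
              lra.
           ++ intros c. simpl. unfold fcons; simpl. fold a0.
              replace (fsum k (fun i => lam i * a (Fin.FS i) c)) with (fsum k (fun i => lam i * a'' i c) + (fsum k (fun i => lam i * inner (a' i) x0) / al) * a0 c).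
              rewrite <- Hb. unfold b'', mu. field. lra.
              unfold a''. assert (H: fsum k (fun i => lam i * inner (a' i) x0) / al * a0 c = fsum k (fun i => (a0 c / al) * (lam i * inner (a' i) x0))) by (rewrite fsum_scal; field; lra).
              rewrite H, <- fsum_plus. apply fsum_ext; intros; unfold a'; field; lra.
    + right. exists (fcons 0 lam). split.
      * apply fcons_all; auto; lra.
      * intros c. simpl. rewrite Hb. unfold a'. ring.
Qed.

Definition delta {m} (l c : Fin.t m) : R := if Fin.eq_dec l c then 1 else 0.

Lemma fsum_delta m (l : Fin.t m) (x : Fin.t m -> R) : fsum m (fun c => delta l c * x c) = x l.
Proof.
  induction m; [inversion l|].
  apply (Fin.caseS' l (fun l => fsum (S m) (fun c => delta l c * x c) = x l)); simpl.
  - unfold delta at 1. destruct (Fin.eq_dec Fin.F1 Fin.F1) as [_|C]; [|congruence].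
    rewrite (fsum_ext _ _ (fun _ => 0)). rewrite fsum_zero; ring.
    intros i. unfold delta. destruct (Fin.eq_dec Fin.F1 (Fin.FS i)) as [C|_]; [inversion C|ring].
  - intros p. unfold delta at 1. destruct (Fin.eq_dec (Fin.FS p) Fin.F1) as [C|_]; [inversion C|].
    rewrite <- (IHm p (fun i => x (Fin.FS i))). rewrite Rmult_0_l, Rplus_0_l. apply fsum_ext.
    intros i. unfold delta. destruct (Fin.eq_dec (Fin.FS p) (Fin.FS i)) as [E|E]; destruct (Fin.eq_dec p i) as [E'|E']; auto.
    + exfalso. apply E'. apply Fin.FS_inj; auto.
    + exfalso. apply E. subst; auto.
Qed.

Lemma simplex_delta m (l : Fin.t m) : simplex m (delta l).
Proof. split. intros c; unfold delta; destruct Fin.eq_dec; lra.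
  rewrite <- (fsum_delta m l (fun _ => 1)). apply fsum_ext; intros; ring. Qed.

Lemma fsum_zero_nonneg k (lam : Fin.t k -> R) : (forall i, 0 <= lam i) -> fsum k lam = 0 -> forall i, lam i = 0.
Proof. intros H1 H2 i. pose proof (fsum_ge_term k lam i H1). pose proof (H1 i). lra. Qed.

Lemma delta_sym m (l c : Fin.t m) : delta l c = delta c l.
Proof. unfold delta. destruct (Fin.eq_dec l c); destruct (Fin.eq_dec c l); subst; auto; congruence. Qed.

Lemma simplex_normalize k (lam : Fin.t k -> R) : (forall i, 0 <= lam i) -> 0 < fsum k lam ->
  simplex k (fun i => / fsum k lam * lam i).
Proof. intros H1 H2. split. intros i. apply Rmult_le_pos; auto. left; apply Rinv_0_lt_compat; auto.
  rewrite fsum_scal. field. lra. Qed.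

Theorem gordan k m (a : Fin.t k -> vec m) : (0 < k)%nat ->
  (exists lam, simplex k lam /\ forall l, 0 < fsum k (fun j => lam j * a j l)) \/
  (exists xi, simplex m xi /\ forall j, inner xi (a j) <= 0).
Proof.
  intros Hk. destruct m as [|m].
  { left. destruct k; [lia|]. exists (delta Fin.F1). split; [apply simplex_delta|]. intros l; inversion l. }
  set (e := fun (l : Fin.t (S m)) (c : Fin.t (S m)) => - delta l c).
  destruct (farkas (S m) (k + S m) (fcat k (S m) a e) (fun _ => 1)) as [[x [Hx Hb]]|[lam [Hl Hb]]].
  - right. assert (HS : inner (fun _ => 1) x = fsum (S m) x) by (unfold inner; apply fsum_ext; intros; ring).
    assert (Hxp : forall l, 0 <= x l).
    { intros l. specialize (Hx (Fin.R k l)). rewrite fcat_R in Hx. unfold e in Hx.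
      replace (inner (fun c => - delta l c) x) with (- fsum (S m) (fun c => delta l c * x c)) in Hx.
      rewrite fsum_delta in Hx. lra. unfold inner. rewrite <- fsum_opp. apply fsum_ext; intros; ring. }
    rewrite HS in Hb. exists (fun l => / fsum (S m) x * x l). split.
    + apply simplex_normalize; auto.
    + intros j. specialize (Hx (Fin.L (S m) j)). rewrite fcat_L in Hx.
      unfold inner. rewrite (fsum_ext _ _ (fun i => / fsum (S m) x * (a j i * x i))) by (intros; ring).
      rewrite fsum_scal. assert (0 < / fsum (S m) x) by (apply Rinv_0_lt_compat; lra).
      unfold inner in Hx. nra.
  - left. set (lamL := fun j => lam (Fin.L (S m) j)).
    assert (Hc : forall c, fsum k (fun j => lamL j * a j c) = 1 + lam (Fin.R k c)).
    { intros c. rewrite (Hb c), fsum_split. unfold lamL. rewrite !(fsum_ext _ _ _ (fun i => f_equal (fun z => lam _ * z c) (fcat_L k (S m) a e i))).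
      rewrite (fsum_ext (S m) _ (fun j => -1 * (delta c j * lam (Fin.R k j)))).
      rewrite fsum_scal, fsum_delta. ring.
      intros j. rewrite fcat_R. unfold e. rewrite delta_sym. ring. }
    assert (HT : 0 < fsum k lamL).
    { destruct (Rlt_dec 0 (fsum k lamL)) as [P|P]; auto. exfalso.
      assert (Z : forall j, lamL j = 0). { apply fsum_zero_nonneg. intros j; apply Hl. pose proof (fsum_nonneg k lamL (fun j => Hl _)). lra. }
      specialize (Hc Fin.F1). rewrite (fsum_ext _ _ (fun _ => 0)) in Hc by (intros j; rewrite Z; ring).
      rewrite fsum_zero in Hc. pose proof (Hl (Fin.R k Fin.F1)). lra. }
    exists (fun j => / fsum k lamL * lamL j). split.
    + apply simplex_normalize; auto. intros j; apply Hl.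
    + intros l. rewrite (fsum_ext _ _ (fun j => / fsum k lamL * (lamL j * a j l))) by (intros; ring).
      rewrite fsum_scal, Hc. pose proof (Hl (Fin.R k l)). apply Rmult_lt_0_compat; [apply Rinv_0_lt_compat; auto|lra].
Qed.

Lemma frac_lt L a : 0 <= L -> 0 < a -> L * (a / (L + 1)) < a.
Proof. intros. replace (L * (a / (L + 1))) with (a - a / (L + 1)) by (field; lra).
  assert (0 < a / (L+1)) by (apply Rdiv_lt_0_compat; lra). lra. Qed.

Lemma closed_ext n (A B : vec n -> Prop) : (forall x, A x <-> B x) -> is_closed A -> is_closed B.
Proof. intros E HA x Hx. apply E, HA. intros eps He. destruct (Hx eps He) as [y [Hy Hd]]. exists y; split; auto; apply E; auto. Qed.

Lemma closed_and n (A B : vec n -> Prop) : is_closed A -> is_closed B -> is_closed (fun x => A x /\ B x).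
Proof.
  intros HA HB x Hx. split; [apply HA|apply HB]; intros eps He; destruct (Hx eps He) as [y [[Ay By] Hd]]; exists y; auto.
Qed.

Lemma closed_lip n (f : vec n -> R) L : 0 <= L -> (forall x y, Rabs (f x - f y) <= L * vdist x y) ->
  is_closed (fun x => 0 <= f x).
Proof.
  intros HL Hf x Hx. destruct (Rle_dec 0 (f x)) as [P|P]; auto. exfalso.
  destruct (Hx ((- f x) / (L + 1))) as [y [Hy Hd]].
  { apply Rdiv_lt_0_compat; lra. }
  pose proof (Hf y x). apply Rabs_le_inv in H.
  assert (L * vdist y x <= L * (- f x / (L + 1))) by (apply Rmult_le_compat_l; lra).
  assert (L * (- f x / (L + 1)) < - f x) by (apply frac_lt; lra).
  lra.
Qed.

Lemma closed_norm_le n R0 : is_closed (fun x : vec n => vnorm x <= R0).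
Proof.
  apply (closed_ext _ (fun x => 0 <= R0 - vnorm x)). intros; lra.
  apply (closed_lip n _ 1). lra. intros x y. pose proof (norm_le_dist n x y). pose proof (norm_le_dist n y x).
  rewrite vdist_sym in H0. apply Rabs_le; lra.
Qed.

Lemma closed_norm_ge n R0 : is_closed (fun x : vec n => R0 <= vnorm x).
Proof.
  apply (closed_ext _ (fun x => 0 <= vnorm x - R0)). intros; lra.
  apply (closed_lip n _ 1). lra. intros x y. pose proof (norm_le_dist n x y). pose proof (norm_le_dist n y x).
  rewrite vdist_sym in H0. apply Rabs_le; lra.
Qed.

Lemma fsum_const n c : fsum n (fun _ => c) = INR n * c.
Proof. induction n; simpl fsum. simpl; ring. rewrite IHn, S_INR. ring. Qed.

Lemma fsum_lip m (x y : vec m) : Rabs (fsum m x - fsum m y) <= INR m * vdist x y.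
Proof.
  rewrite <- fsum_minus. eapply Rle_trans; [apply fsum_abs|]. rewrite <- fsum_const. apply fsum_le.
  intros i. apply (comp_le_norm m (vsub x y) i).
Qed.

Lemma simplex_closed m : is_closed (simplex m).
Proof.
  intros x Hx. split.
  - intros l. destruct (Rle_dec 0 (x l)) as [P|P]; auto. exfalso.
    destruct (Hx (- x l)) as [y [[Hy _] Hd]]. lra.
    pose proof (comp_le_norm m (vsub y x) l). change (vnorm (vsub y x)) with (vdist y x) in H. unfold vsub in H. pose proof (Hy l).
    apply Rabs_le_inv in H. lra.
  - destruct (Req_dec (fsum m x) 1) as [E|E]; auto. exfalso.
    set (d := Rabs (fsum m x - 1)). assert (0 < d) by (apply Rabs_pos_lt; lra).
    destruct (Hx (d / (INR m + 1))) as [y [[_ Hy] Hd]].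
    { apply Rdiv_lt_0_compat; auto. pose proof (pos_INR m); lra. }
    pose proof (fsum_lip m x y). rewrite vdist_sym in H0. rewrite Hy in H0.
    pose proof (pos_INR m). pose proof (vdist_nonneg m y x).
    assert (INR m * vdist y x <= INR m * (d / (INR m + 1))) by (apply Rmult_le_compat_l; lra).
    assert (INR m * (d / (INR m + 1)) < d) by (apply frac_lt; lra).
    unfold d in *. lra.
Qed.

Lemma simplex_box m xi : simplex m xi -> box m 1 xi.
Proof. intros [H1 H2] l. rewrite Rabs_pos_eq by auto. rewrite <- H2. apply fsum_ge_term; auto. Qed.

Lemma conv_comb n (C : vec n -> Prop) : is_convex C -> forall k (lam : Fin.t k -> R) (y : Fin.t k -> vec n),
  simplex k lam -> (forall j, C (y j)) -> C (fun c => fsum k (fun j => lam j * y j c)).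
Proof.
  intros HC k. induction k as [|k IH]; intros lam y [H1 H2] Hy.
  - simpl in H2. lra.
  - simpl in H2. simpl.
    assert (Hr : 0 <= fsum k (fun j => lam (Fin.FS j))) by (apply fsum_nonneg; auto).
    destruct (Req_dec (lam Fin.F1) 1) as [E|E].
    + assert (Z : forall j, lam (Fin.FS j) = 0). { apply (fsum_zero_nonneg k (fun j => lam (Fin.FS j))); auto. lra. }
      replace (fun c => lam Fin.F1 * y Fin.F1 c + fsum k (fun i => lam (Fin.FS i) * y (Fin.FS i) c)) with (y Fin.F1); auto.
      apply functional_extensionality; intros c. rewrite E. rewrite (fsum_ext _ _ (fun _ => 0)). rewrite fsum_zero; ring.
      intros j; rewrite Z; ring.
    + set (s := fsum k (fun j => lam (Fin.FS j))). assert (Hs : 0 < s) by (pose proof (H1 Fin.F1); unfold s; lra).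
      assert (Hz : C (fun c => fsum k (fun j => (/ s * lam (Fin.FS j)) * y (Fin.FS j) c))).
      { apply IH; auto. apply simplex_normalize; auto. }
      pose proof (HC (y Fin.F1) _ (lam Fin.F1) (Hy Fin.F1) Hz) as HH.
      replace (fun c => lam Fin.F1 * y Fin.F1 c + fsum k (fun i => lam (Fin.FS i) * y (Fin.FS i) c))
        with (fun i => lam Fin.F1 * y Fin.F1 i + (1 - lam Fin.F1) * fsum k (fun j => / s * lam (Fin.FS j) * y (Fin.FS j) i)).
      apply HH. pose proof (H1 Fin.F1). lra.
      apply functional_extensionality; intros c. f_equal.
      rewrite (fsum_ext _ _ (fun j => / s * (lam (Fin.FS j) * y (Fin.FS j) c))) by (intros; ring).
      rewrite fsum_scal. replace (1 - lam Fin.F1) with s by (unfold s; lra). field. lra.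
Qed.

Lemma inner_fsum_r n k (a : vec n) (f : Fin.t k -> vec n) :
  inner a (fun c => fsum k (fun j => f j c)) = fsum k (fun j => inner a (f j)).
Proof.
  unfold inner. rewrite (fsum_ext _ _ (fun c => fsum k (fun j => a c * f j c))) by (intros; rewrite fsum_scal; auto).
  apply fsum_comm.
Qed.

Lemma vsub_comb n k (lam : Fin.t k -> R) (y : Fin.t k -> vec n) (z : vec n) : fsum k lam = 1 ->
  vsub z (fun c => fsum k (fun j => lam j * y j c)) = (fun c => fsum k (fun j => lam j * vsub z (y j) c)).
Proof.
  intros H. apply functional_extensionality; intros c. unfold vsub.
  rewrite (fsum_ext k (fun j => lam j * (z c - y j c)) (fun j => z c * lam j - lam j * y j c)) by (intros; ring).
  rewrite fsum_minus, fsum_scal, H. ring.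
Qed.

Lemma vsub_comb2 n k (lam : Fin.t k -> R) (y : Fin.t k -> vec n) (z : vec n) : fsum k lam = 1 ->
  vsub (fun c => fsum k (fun j => lam j * y j c)) z = (fun c => fsum k (fun j => lam j * vsub (y j) z c)).
Proof.
  intros H. apply functional_extensionality; intros c. unfold vsub.
  rewrite (fsum_ext k (fun j => lam j * (y j c - z c)) (fun j => lam j * y j c - z c * lam j)) by (intros; ring).
  rewrite fsum_minus, fsum_scal, H. ring.
Qed.

Lemma inner_comb_r n k (a z : vec n) (lam : Fin.t k -> R) (y : Fin.t k -> vec n) : fsum k lam = 1 ->
  inner a (vsub z (fun c => fsum k (fun j => lam j * y j c))) = fsum k (fun j => lam j * inner a (vsub z (y j))).
Proof.
  intros H. rewrite vsub_comb by auto. rewrite inner_fsum_r. apply fsum_ext. intros j.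
  unfold inner. rewrite <- fsum_scal. apply fsum_ext; intros; ring.
Qed.

Lemma inner_comb_r2 n k (a z : vec n) (lam : Fin.t k -> R) (y : Fin.t k -> vec n) : fsum k lam = 1 ->
  inner a (vsub (fun c => fsum k (fun j => lam j * y j c)) z) = fsum k (fun j => lam j * inner a (vsub (y j) z)).
Proof.
  intros H. rewrite vsub_comb2 by auto. rewrite inner_fsum_r. apply fsum_ext. intros j.
  unfold inner. rewrite <- fsum_scal. apply fsum_ext; intros; ring.
Qed.

Lemma inner_cont_l n (a b v : vec n) : Rabs (inner a v - inner b v) <= vdist a b * vnorm v.
Proof. rewrite <- inner_sub_l. apply CS. Qed.

Lemma comb_sub n t (y x : vec n) : vsub (fun i => t * y i + (1 - t) * x i) x = (fun i => t * vsub y x i).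
Proof. apply functional_extensionality; intros; unfold vsub; ring. Qed.

Lemma minty n (C : vec n -> Prop) (G : vec n -> vec n) x : is_convex C -> continuous_on C G -> C x ->
  (forall y, C y -> 0 <= inner (G y) (vsub y x)) -> Sol G C x.
Proof.
  intros HC HG Cx H. split; auto. intros y Cy.
  destruct (Rle_dec 0 (inner (G x) (vsub y x))) as [P|P]; auto. exfalso.
  set (eta := - inner (G x) (vsub y x)). assert (Heta : 0 < eta) by (unfold eta; lra).
  set (N := vnorm (vsub y x)). assert (HN : 0 <= N) by apply vnorm_nonneg.
  destruct (HG x Cx (eta / (N + 1))) as [del [Hdel Hd]]. apply Rdiv_lt_0_compat; lra.
  set (t := Rmin 1 (del / (N + 1))). assert (Ht : 0 < t <= 1).
  { unfold t. split. apply Rmin_glb_lt. lra. apply Rdiv_lt_0_compat; lra. apply Rmin_l. }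
  set (z := fun i => t * y i + (1 - t) * x i).
  assert (Cz : C z) by (apply HC; auto; lra).
  assert (Hzx : vdist z x < del).
  { unfold vdist, z. rewrite comb_sub, vnorm_scal, Rabs_pos_eq by lra. fold N.
    assert (t * N <= del / (N+1) * N) by (apply Rmult_le_compat_r; auto; apply Rmin_r).
    assert (del / (N + 1) * N < del) by (rewrite Rmult_comm; apply frac_lt; lra). lra. }
  specialize (Hd z Cz Hzx). specialize (H z Cz). unfold z in H. rewrite comb_sub in H. fold z in H.
  replace (inner (G z) (fun i => t * vsub y x i)) with (t * inner (G z) (vsub y x)) in H
    by (unfold inner; rewrite <- fsum_scal; apply fsum_ext; intros; ring).
  assert (0 <= inner (G z) (vsub y x)). { apply Rmult_le_reg_l with t; lra. }
  pose proof (inner_cont_l n (G z) (G x) (vsub y x)). fold N in H1. apply Rabs_le_inv in H1.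
  assert (vdist (G z) (G x) * N <= eta / (N + 1) * N) by (apply Rmult_le_compat_r; lra).
  assert (eta / (N + 1) * N < eta) by (rewrite Rmult_comm; apply frac_lt; lra).
  unfold eta in *. lra.
Qed.

Lemma sol_minty n (C : vec n -> Prop) G x : (forall y z, C y -> C z -> 0 <= inner (vsub (G y) (G z)) (vsub y z)) ->
  Sol G C x -> forall y, C y -> 0 <= inner (G y) (vsub y x).
Proof.
  intros Hm [Cx Hx] y Cy. specialize (Hm y x Cy Cx). specialize (Hx y Cy). rewrite inner_sub_l in Hm. lra.
Qed.

Definition Kball {n} (K : vec n -> Prop) R0 := fun z => K z /\ vnorm z <= R0.

Lemma Kball_convex n (K : vec n -> Prop) R0 : is_convex K -> is_convex (Kball K R0).
Proof.
  intros HK x y t [Kx Nx] [Ky Ny] Ht. split. apply HK; auto.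
  eapply Rle_trans; [apply norm_comb; auto|]. nra.
Qed.

Lemma sol_interior n (K : vec n -> Prop) G R0 x : is_convex K -> Sol G (Kball K R0) x -> vnorm x < R0 -> Sol G K x.
Proof.
  intros HK [[Kx Nx] Hx] Hlt. split; auto. intros y Ky.
  set (D := vdist y x). assert (HD : 0 <= D) by apply vdist_nonneg.
  set (t := Rmin 1 ((R0 - vnorm x) / (D + 1))). assert (Ht : 0 < t <= 1).
  { unfold t. split. apply Rmin_glb_lt. lra. apply Rdiv_lt_0_compat; lra. apply Rmin_l. }
  set (w := fun i => t * y i + (1 - t) * x i).
  assert (Hw : Kball K R0 w).
  { split. apply HK; auto; lra. pose proof (norm_le_dist n w x). unfold vdist at 1 in H. unfold w in H.
    rewrite comb_sub, vnorm_scal, Rabs_pos_eq in H by lra. fold (vdist y x) D in H.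
    assert (t * D <= (R0 - vnorm x) / (D + 1) * D) by (apply Rmult_le_compat_r; auto; apply Rmin_r).
    assert ((R0 - vnorm x) / (D + 1) * D < R0 - vnorm x) by (rewrite Rmult_comm; apply frac_lt; lra).
    fold w in H. lra. }
  specialize (Hx w Hw). unfold w in Hx. rewrite comb_sub in Hx.
  replace (inner (G x) (fun i => t * vsub y x i)) with (t * inner (G x) (vsub y x)) in Hx
    by (unfold inner; rewrite <- fsum_scal; apply fsum_ext; intros; ring).
  apply Rmult_le_reg_l with t; lra.
Qed.

Lemma sol_convex n (C : vec n -> Prop) G : is_convex C -> continuous_on C G ->
  (forall y z, C y -> C z -> 0 <= inner (vsub (G y) (G z)) (vsub y z)) ->
  is_convex (Sol G C).
Proof.
  intros HC HG Hm x1 x2 t S1 S2 Ht. apply minty; auto.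
  apply HC; auto; [apply S1|apply S2].
  intros y Cy. pose proof (sol_minty n C G x1 Hm S1 y Cy). pose proof (sol_minty n C G x2 Hm S2 y Cy).
  replace (vsub y (fun i => t * x1 i + (1 - t) * x2 i)) with (fun i => t * vsub y x1 i + (1 - t) * vsub y x2 i)
    by (apply functional_extensionality; intros; unfold vsub; ring).
  rewrite inner_lin_r. nra.
Qed.

Fixpoint fol {A} (l : list A) : Fin.t (length l) -> A :=
  match l return Fin.t (length l) -> A with
  | [] => fun i => Fin.case0 (fun _ => A) i
  | a :: l' => fcons a (fol l')
  end.

Lemma fol_in {A} (l : list A) a : In a l -> exists i, fol l i = a.
Proof.
  induction l; simpl; [contradiction|]. intros [E|H].
  - exists Fin.F1. subst; reflexivity.
  - destruct (IHl H) as [i Hi]. exists (Fin.FS i). simpl. auto.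
Qed.

Lemma fsum_sym_nonneg k (lam : Fin.t k -> R) (A : Fin.t k -> Fin.t k -> R) :
  (forall i, 0 <= lam i) -> (forall i j, 0 <= A i j + A j i) ->
  0 <= fsum k (fun i => lam i * fsum k (fun j => lam j * A i j)).
Proof.
  intros Hl HA.
  assert (E : 2 * fsum k (fun i => lam i * fsum k (fun j => lam j * A i j)) =
              fsum k (fun i => fsum k (fun j => lam i * lam j * (A i j + A j i)))).
  { assert (E1 : fsum k (fun i => lam i * fsum k (fun j => lam j * A i j)) = fsum k (fun i => fsum k (fun j => lam i * lam j * A i j))).
    { apply fsum_ext; intros i. rewrite <- fsum_scal. apply fsum_ext; intros; ring. }
    assert (E2 : fsum k (fun i => fsum k (fun j => lam i * lam j * A i j)) = fsum k (fun i => fsum k (fun j => lam i * lam j * A j i))).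
    { rewrite fsum_comm. apply fsum_ext; intros; apply fsum_ext; intros; ring. }
    rewrite (fsum_ext k (fun i => fsum k (fun j => lam i * lam j * (A i j + A j i))) (fun i => fsum k (fun j => lam i * lam j * A i j) + fsum k (fun j => lam i * lam j * A j i))).
    rewrite fsum_plus, <- E2, E1. ring.
    intros i. rewrite <- fsum_plus. apply fsum_ext; intros; ring. }
  assert (0 <= fsum k (fun i => fsum k (fun j => lam i * lam j * (A i j + A j i)))).
  { apply fsum_nonneg; intros i; apply fsum_nonneg; intros j. apply Rmult_le_pos; auto. apply Rmult_le_pos; auto. }
  lra.
Qed.

Theorem vi_exist n R0 (C : vec n -> Prop) (G : vec n -> vec n) :
  is_closed C -> is_convex C -> (exists x, C x) -> (forall x, C x -> box n R0 x) ->
  continuous_on C G -> (forall y z, C y -> C z -> 0 <= inner (vsub (G y) (G z)) (vsub y z)) ->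
  exists x, Sol G C x.
Proof.
  intros Hcl Hcv [x0 Cx0] Hb HG Hm.
  destruct (FIP n R0 C (sig C) (fun y x => 0 <= inner (G (proj1_sig y)) (vsub (proj1_sig y) x)) Hcl Hb)
    as [x [Cx Hx]].
  - intros [y Cy]; simpl. apply (closed_lip n _ (vnorm (G y))). apply vnorm_nonneg.
    intros u v. rewrite Rabs_minus_sym. rewrite inner_sub_r, (inner_sub_r _ y u).
    replace (inner (G y) y - inner (G y) v - (inner (G y) y - inner (G y) u)) with (inner (G y) u - inner (G y) v) by ring.
    apply inner_cont.
  - intros l. destruct l as [|p l'].
    + exists x0. split; auto. intros j [].
    + set (l := p :: l'). set (k := length l). set (ys := fun i => proj1_sig (fol l i)).
      assert (Cys : forall i, C (ys i)) by (intros i; unfold ys; apply proj2_sig).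
      set (A := fun i j => inner (G (ys i)) (vsub (ys i) (ys j))).
      destruct (gordan k k (fun i => fun j => - A i j)) as [[lam [[Hl0 Hl1] Hlam]] | [xi [[Hx0 Hx1] Hxi]]].
      { unfold k, l; simpl; lia. }
      * exfalso.
        assert (P : 0 < fsum k (fun j => lam j * fsum k (fun i => lam i * - A i j))) by (apply fsum_simplex_pos; auto).
        assert (Q : 0 <= fsum k (fun i => lam i * fsum k (fun j => lam j * A i j))).
        { apply fsum_sym_nonneg; auto. intros i j. unfold A. specialize (Hm (ys i) (ys j) (Cys i) (Cys j)).
          rewrite inner_sub_l, !inner_sub_r in Hm. rewrite !inner_sub_r. lra. }
        assert (fsum k (fun j => lam j * fsum k (fun i => lam i * - A i j)) = - fsum k (fun i => lam i * fsum k (fun j => lam j * A i j))).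
        { transitivity (fsum k (fun j => fsum k (fun i => - (lam j * lam i * A i j)))).
          { apply fsum_ext; intros j. rewrite <- fsum_scal. apply fsum_ext; intros; ring. }
          rewrite fsum_comm. rewrite <- fsum_opp. apply fsum_ext; intros i. rewrite <- fsum_scal, <- fsum_opp. apply fsum_ext; intros; ring. }
        lra.
      * set (x := fun c => fsum k (fun j => xi j * ys j c)).
        exists x. split. apply conv_comb; auto. split; auto.
        intros q Hq. destruct (fol_in l q Hq) as [i Hi]. rewrite <- Hi. fold (ys i).
        unfold x. rewrite inner_comb_r by auto. specialize (Hxi i). unfold inner in Hxi.
        rewrite (fsum_ext _ _ (fun j => - (xi j * A i j))) in Hxi by (intros; ring). rewrite fsum_opp in Hxi.
        unfold A in Hxi. lra.
  - exists x. apply minty; auto. intros y Cy. apply (Hx (exist _ y Cy)).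
Qed.

Lemma inner_Fxi n m (F : Fin.t m -> vec n -> vec n) xi x v :
  inner (Fxi F xi x) v = fsum m (fun l => xi l * inner (F l x) v).
Proof.
  unfold inner, Fxi. rewrite (fsum_ext n _ (fun i => fsum m (fun l => xi l * F l x i * v i))).
  rewrite fsum_comm. apply fsum_ext; intros l. rewrite <- fsum_scal. apply fsum_ext; intros; ring.
  intros i. rewrite Rmult_comm, <- fsum_scal. apply fsum_ext; intros; ring.
Qed.

Lemma Fxi_mono n m K (F : Fin.t m -> vec n -> vec n) xi : (forall l, 0 <= xi l) -> (forall l, monotone_on K (F l)) ->
  forall y z, K y -> K z -> 0 <= inner (vsub (Fxi F xi y) (Fxi F xi z)) (vsub y z).
Proof.
  intros H0 Hm y z Ky Kz. rewrite inner_sub_l, !inner_Fxi, <- fsum_minus. apply fsum_nonneg. intros l.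
  specialize (Hm l z y Kz Ky). rewrite inner_sub_l in Hm. specialize (H0 l). nra.
Qed.

Lemma finite_delta m (P : Fin.t m -> R -> Prop) : (forall l d d', P l d -> 0 < d' <= d -> P l d') ->
  (forall l, exists d, 0 < d /\ P l d) -> exists d, 0 < d /\ forall l, P l d.
Proof.
  induction m; intros Hmon H.
  - exists 1. split; [lra|]. intros l; inversion l.
  - destruct (IHm (fun l d => P (Fin.FS l) d)) as [d1 [Hd1 H1]]; auto.
    intros l d d'; apply Hmon. destruct (H Fin.F1) as [d0 [Hd0 H0]].
    exists (Rmin d0 d1). split. apply Rmin_glb_lt; auto.
    intros l. apply (Fin.caseS' l (fun l => P l (Rmin d0 d1))).
    + apply Hmon with d0; auto. split. apply Rmin_glb_lt; auto. apply Rmin_l.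
    + intros p. apply Hmon with d1; auto. split. apply Rmin_glb_lt; auto. apply Rmin_r.
Qed.

Lemma vnorm_fsum n m (f : Fin.t m -> vec n) : vnorm (fun i => fsum m (fun l => f l i)) <= fsum m (fun l => vnorm (f l)).
Proof.
  induction m; simpl.
  - replace (fun _ : Fin.t n => 0) with (fun i : Fin.t n => 0 * (fun _ => 0) i) by (apply functional_extensionality; intros; ring).
    rewrite vnorm_scal, Rabs_R0. lra.
  - eapply Rle_trans; [apply (vnorm_triang n (f Fin.F1) (fun i => fsum m (fun l => f (Fin.FS l) i)))|].
    specialize (IHm (fun l => f (Fin.FS l))). simpl in IHm. lra.
Qed.

Lemma Fxi_cont n m K (F : Fin.t m -> vec n -> vec n) xi : (forall l, continuous_on K (F l)) ->
  continuous_on K (Fxi F xi).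
Proof.
  intros Hc x Kx eps He. set (S := fsum m (fun l => Rabs (xi l)) + 1).
  assert (HS : 0 < S). { unfold S. pose proof (fsum_nonneg m (fun l => Rabs (xi l)) (fun l => Rabs_pos _)). lra. }
  destruct (finite_delta m (fun l d => forall y, K y -> vdist y x < d -> vdist (F l y) (F l x) < eps / S)) as [d [Hd H]].
  - intros l d d' H0 H1 y Ky Hy. apply H0; auto. lra.
  - intros l. apply Hc; auto. apply Rdiv_lt_0_compat; lra.
  - exists d. split; auto. intros y Ky Hy. unfold vdist, Fxi, vsub.
    replace (fun i => fsum m (fun l => xi l * F l y i) - fsum m (fun l => xi l * F l x i))
      with (fun i => fsum m (fun l => (fun l i => xi l * vsub (F l y) (F l x) i) l i)).
    2:{ apply functional_extensionality; intros i. rewrite <- fsum_minus. apply fsum_ext; intros; unfold vsub; ring. }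
    eapply Rle_lt_trans; [apply vnorm_fsum|]. simpl. rewrite (fsum_ext _ _ (fun l => Rabs (xi l) * vdist (F l y) (F l x))) by (intros; apply vnorm_scal).
    apply Rle_lt_trans with (fsum m (fun l => Rabs (xi l) * (eps / S))).
    + apply fsum_le. intros l. apply Rmult_le_compat_l. apply Rabs_pos. left; apply H; auto.
    + rewrite (fsum_ext _ _ (fun l => (eps / S) * Rabs (xi l))) by (intros; ring). rewrite fsum_scal.
      replace (fsum m (fun l => Rabs (xi l))) with (S - 1) by (unfold S; ring).
      assert (eps / S * (S - 1) = eps - eps / S) by (field; lra). rewrite H0.
      assert (0 < eps / S) by (apply Rdiv_lt_0_compat; lra). lra.
Qed.

Lemma Sol_SolW n m K (F : Fin.t m -> vec n -> vec n) xi x : simplex m xi -> Sol (Fxi F xi) K x -> SolW F K x.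
Proof.
  intros [H0 H1] [Kx Hx]. split; auto. intros y Ky Hp. specialize (Hx y Ky). rewrite inner_Fxi in Hx.
  pose proof (fsum_simplex_pos m xi (fun l => inner (F l x) (vsub x y)) H0 H1 Hp).
  rewrite (fsum_ext _ _ (fun l => - (xi l * inner (F l x) (vsub x y)))) in Hx.
  rewrite fsum_opp in Hx. lra. intros l. rewrite !inner_sub_r. ring.
Qed.

Theorem scalarize n m K (F : Fin.t m -> vec n -> vec n) x : is_convex K -> SolW F K x ->
  exists xi, simplex m xi /\ Sol (Fxi F xi) K x.
Proof.
  intros HK [Kx Hx]. destruct m as [|m'].
  { exfalso. apply (Hx x Kx). intros l; inversion l. }
  set (cv := fun y l => inner (F l x) (vsub x y)).
  destruct (FIP (S m') 1 (simplex (S m')) (sig K) (fun y xi => 0 <= - inner xi (cv (proj1_sig y))) (simplex_closed _) (simplex_box _))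
    as [xi [Hxi Hall]].
  - intros [y Ky]; simpl. apply (closed_lip _ _ (vnorm (cv y))). apply vnorm_nonneg.
    intros u v. rewrite (inner_sym _ u), (inner_sym _ v).
    replace (- inner (cv y) u - - inner (cv y) v) with (- (inner (cv y) u - inner (cv y) v)) by ring.
    rewrite Rabs_Ropp. apply inner_cont.
  - intros l. destruct l as [|p l'].
    + exists (delta Fin.F1). split. apply simplex_delta. intros j [].
    + set (l := p :: l'). set (k := length l). set (ys := fun i => proj1_sig (fol l i)).
      assert (Kys : forall i, K (ys i)) by (intros i; unfold ys; apply proj2_sig).
      destruct (gordan k (S m') (fun j => cv (ys j))) as [[lam [[Hl0 Hl1] Hlam]] | [xi [Hs Hxi]]].
      { unfold k, l; simpl; lia. }
      * exfalso. set (yb := fun c => fsum k (fun j => lam j * ys j c)).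
        assert (Kyb : K yb) by (apply conv_comb; auto; split; auto).
        apply (Hx yb Kyb). intros q. specialize (Hlam q). unfold yb. rewrite inner_comb_r by auto. unfold cv in Hlam. auto.
      * exists xi. split; auto. intros q Hq. destruct (fol_in l q Hq) as [i Hi]. rewrite <- Hi. fold (ys i).
        specialize (Hxi i). lra.
  - exists xi. split; auto. split; auto. intros y Ky. specialize (Hall (exist _ y Ky)). simpl in Hall.
    rewrite inner_Fxi. unfold inner at 1 in Hall. unfold cv in Hall.
    rewrite (fsum_ext _ _ (fun l => - (xi l * inner (F l x) (vsub x y)))). rewrite fsum_opp. lra.
    intros l. rewrite !inner_sub_r. ring.
Qed.

Definition minsig (l : list {d : R | 0 < d}) : R := fold_right (fun d acc => Rmin (proj1_sig d) acc) 1 l.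

Lemma minsig_pos l : 0 < minsig l.
Proof. induction l; simpl. lra. apply Rmin_glb_lt; auto. apply proj2_sig. Qed.

Lemma minsig_le l d : In d l -> minsig l <= proj1_sig d.
Proof. induction l; simpl; [contradiction|]. intros [E|H]. subst; apply Rmin_l. eapply Rle_trans; [apply Rmin_r|auto]. Qed.

Theorem cluster n R0 (B : vec n -> Prop) (P : R -> vec n -> Prop) t0 :
  is_closed B -> (forall x, B x -> box n R0 x) ->
  (forall d, 0 < d -> exists t x, Rabs (t - t0) < d /\ B x /\ P t x) ->
  exists xb, B xb /\ forall d e, 0 < d -> 0 < e -> exists t x, Rabs (t - t0) < d /\ B x /\ P t x /\ vdist x xb < e.
Proof.
  intros HB Hbox H.
  set (A := fun (d : {d : R | 0 < d}) z => forall e, 0 < e -> exists t x, Rabs (t - t0) < proj1_sig d /\ B x /\ P t x /\ vdist x z < e).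
  destruct (FIP n R0 B _ A HB Hbox) as [xb [Bxb Hxb]].
  - intros d z Hz e He. destruct (Hz (e/2)) as [w [Aw Hw]]. lra.
    destruct (Aw (e/2)) as [t [x [H1 [H2 [H3 H4]]]]]. lra.
    exists t, x. repeat split; auto. pose proof (vdist_triang n x w z). lra.
  - intros l. destruct (H (minsig l) (minsig_pos l)) as [t [x [H1 [H2 H3]]]].
    exists x. split; auto. intros d Hd e He. exists t, x. repeat split; auto.
    pose proof (minsig_le l d Hd). lra. rewrite vdist_refl; auto.
  - exists xb. split; auto. intros d e Hd He. apply (Hxb (exist _ d Hd)); auto.
Qed.

Theorem interval_conn (A : R -> Prop) : A 0 ->
  (forall t, 0 < t <= 1 -> (forall s, 0 <= s < t -> A s) -> A t) ->
  (forall t, 0 <= t < 1 -> A t -> exists d, 0 < d /\ forall s, t < s < t + d -> s <= 1 -> A s) ->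
  A 1.
Proof.
  intros H0 Hcl Hop.
  set (E := fun t => 0 <= t <= 1 /\ forall s, 0 <= s <= t -> A s).
  destruct (completeness E) as [ts [Hub Hlub]].
  { exists 1. intros t [Ht _]; lra. }
  { exists 0. split; [lra|]. intros s Hs. replace s with 0 by lra. auto. }
  assert (E0 : E 0) by (split; [lra|]; intros s Hs; replace s with 0 by lra; auto).
  assert (Hts : 0 <= ts <= 1). { split. apply Hub; auto. apply Hlub. intros t [Ht _]; lra. }
  assert (Hbelow : forall s, 0 <= s < ts -> A s).
  { intros s Hs. apply NNPP; intros C. assert (ts <= s); [|lra]. apply Hlub. intros t [Ht Ht2].
    destruct (Rle_dec t s); auto. exfalso. apply C, Ht2. lra. }
  assert (Ats : A ts). { destruct (Req_dec ts 0) as [Z|Z]. rewrite Z; auto. apply Hcl; auto. lra. }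
  assert (Ets : E ts). { split; auto. intros s Hs. destruct (Req_dec s ts). subst; auto. apply Hbelow; lra. }
  destruct (Req_dec ts 1) as [E1|E1].
  - rewrite <- E1; auto.
  - exfalso. destruct (Hop ts) as [d [Hd Hs]]; [lra|auto|].
    set (u := Rmin (ts + d/2) 1).
    assert (Eu : E u).
    { unfold u. split. split. pose proof (Rmin_glb (ts + d/2) 1 0). apply Rmin_glb; lra. apply Rmin_r.
      intros s [Hs1 Hs2]. destruct (Rle_dec s ts). apply Ets; lra.
      apply Hs. split. lra. pose proof (Rmin_l (ts + d/2) 1). lra. pose proof (Rmin_r (ts + d/2) 1). lra. }
    apply Hub in Eu. unfold u in Eu. unfold Rmin in Eu. destruct (Rle_dec (ts + d/2) 1); lra.
Qed.

Definition path {m} (a b : Fin.t m -> R) (t : R) : Fin.t m -> R := fun l => (1 - t) * a l + t * b l.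

Lemma path_simplex m (a b : Fin.t m -> R) t : simplex m a -> simplex m b -> 0 <= t <= 1 -> simplex m (path a b t).
Proof.
  intros [Ha0 Ha1] [Hb0 Hb1] Ht. split.
  - intros l. unfold path. specialize (Ha0 l). specialize (Hb0 l). nra.
  - unfold path. rewrite fsum_plus, !fsum_scal, Ha1, Hb1. ring.
Qed.

Lemma path0 m (a b : Fin.t m -> R) : path a b 0 = a.
Proof. apply functional_extensionality; intros; unfold path; ring. Qed.
Lemma path1 m (a b : Fin.t m -> R) : path a b 1 = b.
Proof. apply functional_extensionality; intros; unfold path; ring. Qed.

Lemma g_cont n K (G : vec n -> vec n) y xb : continuous_on K G -> K xb ->
  forall eps, 0 < eps -> exists d, 0 < d /\ forall x, K x -> vdist x xb < d ->
    Rabs (inner (G x) (vsub y x) - inner (G xb) (vsub y xb)) < eps.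
Proof.
  intros HG Kxb eps He.
  set (N := vnorm (vsub y xb) + 1). set (Q := vnorm (G xb) + 1).
  assert (HN : 1 <= N) by (unfold N; pose proof (vnorm_nonneg n (vsub y xb)); lra).
  assert (HQ : 1 <= Q) by (unfold Q; pose proof (vnorm_nonneg n (G xb)); lra).
  destruct (HG xb Kxb (eps / (2 * N))) as [d1 [Hd1 H1]]. apply Rdiv_lt_0_compat; lra.
  exists (Rmin 1 (Rmin d1 (eps / (2 * Q)))). split.
  { apply Rmin_glb_lt. lra. apply Rmin_glb_lt; auto. apply Rdiv_lt_0_compat; lra. }
  intros x Kx Hx.
  assert (Hx1 : vdist x xb < 1) by (eapply Rlt_le_trans; [apply Hx|apply Rmin_l]).
  assert (Hx2 : vdist x xb < d1) by (eapply Rlt_le_trans; [apply Hx|]; eapply Rle_trans; [apply Rmin_r|apply Rmin_l]).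
  assert (Hx3 : vdist x xb < eps / (2 * Q)) by (eapply Rlt_le_trans; [apply Hx|]; eapply Rle_trans; [apply Rmin_r|apply Rmin_r]).
  assert (Eq : inner (G x) (vsub y x) - inner (G xb) (vsub y xb) = inner (vsub (G x) (G xb)) (vsub y x) + inner (G xb) (vsub xb x)).
  { rewrite !inner_sub_l, !inner_sub_r. ring. }
  rewrite Eq. eapply Rle_lt_trans; [apply Rabs_triang|].
  pose proof (CS n (vsub (G x) (G xb)) (vsub y x)). pose proof (CS n (G xb) (vsub xb x)).
  fold (vdist (G x) (G xb)) in H. fold (vdist xb x) in H0. rewrite vdist_sym in H0.
  specialize (H1 x Kx Hx2).
  assert (vnorm (vsub y x) <= N).
  { unfold N. pose proof (vdist_triang n y xb x). unfold vdist in H2. rewrite vdist_sym in Hx1. unfold vdist in Hx1. lra. }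
  pose proof (vnorm_nonneg n (vsub y x)). pose proof (vdist_nonneg n (G x) (G xb)). pose proof (vdist_nonneg n x xb).
  assert (vdist (G x) (G xb) * vnorm (vsub y x) <= eps / (2 * N) * N) by (apply Rmult_le_compat; lra).
  assert (vnorm (G xb) * vdist x xb <= Q * (eps / (2 * Q))) by (apply Rmult_le_compat; unfold Q in *; try lra; apply vnorm_nonneg).
  assert (eps / (2 * N) * N = eps / 2) by (field; lra). assert (Q * (eps / (2 * Q)) = eps / 2) by (field; lra).
  assert (vdist (G x) (G xb) * vnorm (vsub y x) < eps / 2 \/ vnorm (G xb) * vdist x xb < eps / 2).
  { left. apply Rle_lt_trans with (vdist (G x) (G xb) * N). apply Rmult_le_compat_l; lra.
    apply Rlt_le_trans with (eps / (2 * N) * N). apply Rmult_lt_compat_r; lra. lra. }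
  lra.
Qed.

Theorem param_limit n m K (F : Fin.t m -> vec n -> vec n) a b t0 xb y :
  (forall l, continuous_on K (F l)) -> simplex m a -> simplex m b -> K xb ->
  (forall d e, 0 < d -> 0 < e -> exists t x, Rabs (t - t0) < d /\ 0 <= t <= 1 /\ K x /\
      0 <= inner (Fxi F (path a b t) x) (vsub y x) /\ vdist x xb < e) ->
  0 <= inner (Fxi F (path a b t0) xb) (vsub y xb).
Proof.
  intros Hc Ha Hb Kxb H. set (g := fun l x => inner (F l x) (vsub y x)).
  rewrite inner_Fxi. change (0 <= fsum m (fun l => path a b t0 l * g l xb)).
  destruct (Rle_dec 0 (fsum m (fun l => path a b t0 l * g l xb))) as [P|P]; auto. exfalso.
  set (eta := - fsum m (fun l => path a b t0 l * g l xb)). assert (Heta : 0 < eta) by (unfold eta; lra).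
  set (D := Rabs (fsum m (fun l => (b l - a l) * g l xb))).
  destruct (finite_delta m (fun l d => forall x, K x -> vdist x xb < d -> Rabs (g l x - g l xb) < eta / 2)) as [e [He He2]].
  { intros l d d' H1 H2 x Kx Hx. apply H1; auto. lra. }
  { intros l. apply g_cont; auto. lra. }
  assert (HD : 0 <= D) by apply Rabs_pos.
  destruct (H (eta / (2 * (D + 1))) e) as [t [x [Ht [Ht01 [Kx [Hf Hd]]]]]]; auto.
  { apply Rdiv_lt_0_compat; lra. }
  rewrite inner_Fxi in Hf. change (0 <= fsum m (fun l => path a b t l * g l x)) in Hf.
  assert (Eq : fsum m (fun l => path a b t l * g l x) =
               fsum m (fun l => path a b t l * (g l x - g l xb)) + (t - t0) * fsum m (fun l => (b l - a l) * g l xb) - eta).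
  { unfold eta. rewrite <- fsum_scal. rewrite <- fsum_plus. rewrite Rminus_def, Ropp_involutive, <- fsum_plus. apply fsum_ext; intros l.
    unfold path. ring. }
  destruct (path_simplex m a b t Ha Hb Ht01) as [Hp0 Hp1].
  assert (T1 : fsum m (fun l => path a b t l * (g l x - g l xb)) < eta / 2).
  { pose proof (fsum_simplex_pos m (path a b t) (fun l => eta / 2 - (g l x - g l xb)) Hp0 Hp1).
    assert (forall l, 0 < eta / 2 - (g l x - g l xb)). { intros l. specialize (He2 l x Kx Hd). apply Rabs_def2 in He2. lra. }
    specialize (H0 H1). rewrite (fsum_ext _ _ (fun l => eta / 2 * path a b t l - path a b t l * (g l x - g l xb))) in H0 by (intros; ring).
    rewrite fsum_minus, fsum_scal, Hp1 in H0. lra. }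
  assert (T2 : (t - t0) * fsum m (fun l => (b l - a l) * g l xb) < eta / 2).
  { apply Rle_lt_trans with (Rabs ((t - t0) * fsum m (fun l => (b l - a l) * g l xb))). apply Rle_abs.
    rewrite Rabs_mult. fold D. apply Rle_lt_trans with (eta / (2 * (D + 1)) * D). apply Rmult_le_compat_r; lra.
    replace (eta / (2 * (D + 1)) * D) with ((eta/2) * (D / (D + 1))) by (field; lra).
    assert (D / (D + 1) < 1). { apply (Rmult_lt_reg_r (D + 1)). lra. unfold Rdiv. rewrite Rmult_assoc, Rinv_l; lra. }
    nra. }
  lra.
Qed.

Lemma seg_dist n (a b : vec n) s r :
  vdist (fun i => s * a i + (1 - s) * b i) (fun i => r * a i + (1 - r) * b i) = Rabs (s - r) * vdist a b.
Proof. unfold vdist. rewrite <- vnorm_scal. apply vnorm_ext. intros; unfold vsub; ring. Qed.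

Lemma cont_sub n (K C : vec n -> Prop) G : continuous_on K G -> (forall x, C x -> K x) -> continuous_on C G.
Proof. intros H HC x Cx eps He. destruct (H x (HC x Cx) eps He) as [d [Hd H2]]. exists d. split; auto. Qed.

Lemma left_pt t d : 0 < t -> 0 < d -> let s := t - Rmin d t / 2 in 0 <= s < t /\ Rabs (s - t) < d.
Proof.
  intros Ht Hd s. pose proof (Rmin_l d t). pose proof (Rmin_r d t).
  assert (0 < Rmin d t) by (apply Rmin_glb_lt; auto). unfold s. split. lra.
  rewrite Rabs_left by lra. lra.
Qed.

Lemma segment_conn n (S U V : vec n -> Prop) (a b : vec n) :
  is_open U -> is_open V -> (forall x, S x -> U x \/ V x) -> (forall x, S x -> U x -> V x -> False) ->
  (forall r, 0 <= r <= 1 -> S (fun i => r * a i + (1 - r) * b i)) -> U b -> U a.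
Proof.
  intros Uo Vo Hcov Hdis HS Ub.
  set (z := fun r => fun i : Fin.t n => r * a i + (1 - r) * b i).
  assert (z1 : z 1 = a) by (apply functional_extensionality; intros; unfold z; ring).
  assert (z0 : z 0 = b) by (apply functional_extensionality; intros; unfold z; ring).
  rewrite <- z1. set (D := vdist a b). assert (HD : 0 <= D) by apply vdist_nonneg.
  apply (interval_conn (fun r => U (z r))).
  - rewrite z0; auto.
  - intros r Hr Hlt. destruct (Hcov (z r) (HS r ltac:(lra))) as [H|H]; auto. exfalso.
    destruct (Vo _ H) as [eps [He Hv]].
    destruct (left_pt r (eps / (D + 1)) ltac:(lra)) as [Hs Hsd]. apply Rdiv_lt_0_compat; lra.
    set (s := r - Rmin (eps / (D + 1)) r / 2) in *.
    apply (Hdis (z s)). apply HS; lra. apply Hlt; lra. apply Hv.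
    unfold z. rewrite seg_dist. fold D.
    apply Rle_lt_trans with (eps / (D + 1) * D). apply Rmult_le_compat_r; lra.
    rewrite Rmult_comm. apply frac_lt; lra.
  - intros r Hr Ur. destruct (Uo _ Ur) as [eps [He Hu]]. exists (eps / (D + 1)). split. apply Rdiv_lt_0_compat; lra.
    intros s Hs Hs1. apply Hu. unfold z. rewrite seg_dist. fold D.
    apply Rle_lt_trans with (eps / (D + 1) * D). apply Rmult_le_compat_r; auto. rewrite Rabs_right; lra.
    rewrite Rmult_comm. apply frac_lt; lra.
Qed.

Theorem theorem3 (n m : nat) (K : vec n -> Prop) (F : Fin.t m -> vec n -> vec n)
  (HKne : exists x, K x) (HKcl : is_closed K) (HKcv : is_convex K)
  (Hcont : forall l, continuous_on K (F l))
  (Hmono : forall l, monotone_on K (F l))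
  (Hbd : is_bounded (SolW F K)) (Hne : exists x, SolW F K x) :
  is_connected (SolW F K) /\
  (forall xi, simplex m xi -> exists x, Sol (Fxi F xi) K x).
Proof.
  destruct Hbd as [M HM]. destruct Hne as [x0 Hx0].
  assert (HM0 : 0 <= M) by (pose proof (HM x0 Hx0); pose proof (vnorm_nonneg n x0); lra).
  set (R1 := M + 1). set (KR := Kball K R1).
  assert (KRcl : is_closed KR) by (apply closed_and; auto; apply closed_norm_le).
  assert (KRcv : is_convex KR) by (apply Kball_convex; auto).
  assert (KRbox : forall x, KR x -> box n R1 x).
  { intros x [_ Hx] i. pose proof (comp_le_norm n x i). lra. }
  assert (KRK : forall x, KR x -> K x) by (intros x [Hx _]; auto).
  assert (Hbound : forall xi x, simplex m xi -> Sol (Fxi F xi) K x -> vnorm x <= M).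
  { intros xi x Hs Hx. apply HM. eapply Sol_SolW; eauto. }
  assert (SolKR : forall xi x, simplex m xi -> Sol (Fxi F xi) K x -> Sol (Fxi F xi) KR x).
  { intros xi x Hs Hx. pose proof (Hbound xi x Hs Hx). destruct Hx as [Kx Hx]. split.
    split; auto. unfold R1; lra. intros y Ky. apply Hx, KRK; auto. }
  assert (Hmx : forall xi, simplex m xi -> forall y z, K y -> K z -> 0 <= inner (vsub (Fxi F xi y) (Fxi F xi z)) (vsub y z)).
  { intros xi [H0 _]. apply Fxi_mono; auto. }
  assert (exR : forall xi, simplex m xi -> exists x, Sol (Fxi F xi) KR x).
  { intros xi Hs. apply (vi_exist n R1 KR); [exact KRcl|exact KRcv| |exact KRbox| |].
    exists x0. split. apply Hx0. unfold R1. pose proof (HM x0 Hx0). lra.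
    apply cont_sub with K; auto. apply Fxi_cont; auto.
    intros y z Hy Hz. apply Hmx; auto. }
  assert (trunc : forall xi, simplex m xi -> (exists x, Sol (Fxi F xi) K x) ->
                  forall x, Sol (Fxi F xi) KR x -> vnorm x <= M).
  { intros xi Hs [xs Hxs] x Hx. pose proof (Hbound xi xs Hs Hxs) as Nxs.
    destruct (Rle_dec (vnorm x) M) as [P|P]; auto. exfalso.
    assert (Nx : vnorm x <= R1) by apply Hx.
    set (r := 1 - (vnorm x - M) / (R1 + M + 1)).
    assert (Hr : 0 <= r < 1).
    { unfold r. assert (0 < (vnorm x - M) / (R1 + M + 1)) by (apply Rdiv_lt_0_compat; unfold R1 in *; lra).
      assert ((vnorm x - M) / (R1 + M + 1) <= 1). { apply (Rmult_le_reg_r (R1 + M + 1)). unfold R1; lra.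
        unfold Rdiv. rewrite Rmult_assoc, Rinv_l. unfold R1 in *; lra. unfold R1; lra. }
      lra. }
    set (z := fun i => r * x i + (1 - r) * xs i).
    assert (Hz : Sol (Fxi F xi) KR z).
    { apply minty; auto. apply cont_sub with K; auto. apply Fxi_cont; auto.
      apply KRcv; [apply Hx | apply (SolKR xi xs Hs Hxs) | lra].
      intros y Hy. pose proof (sol_minty n KR _ x (fun y z Hy Hz => Hmx xi Hs y z (KRK y Hy) (KRK z Hz)) Hx y Hy).
      pose proof (sol_minty n K _ xs (Hmx xi Hs) Hxs y (KRK y Hy)).
      unfold z. replace (vsub y (fun i => r * x i + (1 - r) * xs i)) with (fun i => r * vsub y x i + (1 - r) * vsub y xs i)
        by (apply functional_extensionality; intros; unfold vsub; ring).
      rewrite inner_lin_r. nra. }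
    assert (Nz : vnorm z < R1).
    { eapply Rle_lt_trans. apply norm_comb. lra. unfold R1 in *. nra. }
    pose proof (Hbound xi z Hs (sol_interior n K _ R1 z HKcv Hz Nz)) as Nz2.
    pose proof (norm_le_dist n x z).
    assert (vdist x z = (1 - r) * vdist x xs).
    { unfold vdist, z. replace (vsub x (fun i => r * x i + (1 - r) * xs i)) with (fun i => (1 - r) * vsub x xs i)
        by (apply functional_extensionality; intros; unfold vsub; ring). rewrite vnorm_scal, Rabs_pos_eq; lra. }
    pose proof (norm_le_dist n x xs). rewrite vdist_sym in H1.
    pose proof (vnorm_nonneg n x). pose proof (vdist_nonneg n x xs).
    assert (vdist x xs <= vnorm x + vnorm xs).
    { unfold vdist. replace (vsub x xs) with (fun i => 1 * x i + (-1) * xs i)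
        by (apply functional_extensionality; intros; unfold vsub; ring).
      eapply Rle_trans; [apply vnorm_lin|]. rewrite Rabs_R1, (Rabs_left (-1)) by lra. lra. }
    assert ((1 - r) * vdist x xs <= (1 - r) * (R1 + M)) by (apply Rmult_le_compat_l; lra).
    assert ((1 - r) * (R1 + M) < vnorm x - M).
    { unfold r. replace (1 - (1 - (vnorm x - M) / (R1 + M + 1))) with ((vnorm x - M) / (R1 + M + 1)) by ring.
      rewrite Rmult_comm. apply frac_lt; unfold R1 in *; lra. }
    lra. }
  assert (lim_sol : forall a b t xb, simplex m a -> simplex m b -> KR xb ->
     (forall d e, 0 < d -> 0 < e -> exists s x, Rabs (s - t) < d /\ KR x /\
         (0 <= s <= 1 /\ Sol (Fxi F (path a b s)) KR x) /\ vdist x xb < e) ->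
     Sol (Fxi F (path a b t)) KR xb).
  { intros a b t xb Ha Hb Hxb H. split; auto. intros y Hy.
    apply (param_limit n m K F a b t xb y Hcont Ha Hb (KRK _ Hxb)).
    intros d e Hd He. destruct (H d e Hd He) as [s [x [H1 [H2 [[H3 H4] H5]]]]].
    exists s, x. split; [auto|]. split; [lra|]. split; [apply KRK; auto|]. split; [apply H4; auto|auto]. }
  assert (Hb : forall xi1, simplex m xi1 -> exists x, Sol (Fxi F xi1) K x).
  { intros xi1 H1. destruct (scalarize n m K F x0 HKcv Hx0) as [xi0 [H0 Hs0]].
    rewrite <- (path1 m xi0 xi1).
    apply (interval_conn (fun t => exists x, Sol (Fxi F (path xi0 xi1 t)) K x)).
    - rewrite path0. eauto.
    - intros t Ht Hlt.
      destruct (cluster n R1 (fun x => KR x /\ vnorm x <= M)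
                 (fun s x => 0 <= s <= 1 /\ Sol (Fxi F (path xi0 xi1 s)) KR x) t) as [xb [[Kxb Nxb] Happ]].
      + apply closed_and; auto. apply closed_norm_le.
      + intros x [Hx _]; auto.
      + intros d Hd. destruct (left_pt t d) as [Hs Hsd]; try lra.
        set (s := t - Rmin d t / 2) in *. destruct (Hlt s Hs) as [x Hx].
        assert (Hps : simplex m (path xi0 xi1 s)) by (apply path_simplex; auto; lra).
        exists s, x. split; auto. split. split. { split. apply Hx. unfold R1; pose proof (Hbound _ x Hps Hx); lra. }
        apply (Hbound _ x Hps Hx). split. lra. apply SolKR; auto.
      + exists xb. apply (sol_interior n K _ R1 xb HKcv). apply lim_sol; auto.
        intros d e Hd He. destruct (Happ d e Hd He) as [s [x [H2 [[H3 _] [H4 H5]]]]]. exists s, x. auto.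
        unfold R1; lra.
    - intros t Ht At. apply NNPP. intros C.
      assert (Cl : forall d, 0 < d -> exists s, t < s < t + d /\ s <= 1 /\ ~ exists x, Sol (Fxi F (path xi0 xi1 s)) K x).
      { intros d Hd. apply NNPP. intros C2. apply C. exists d. split; auto. intros s Hs Hs1.
        apply NNPP. intros C3. apply C2. exists s. auto. }
      destruct (cluster n R1 (fun x => KR x /\ R1 <= vnorm x)
                 (fun s x => 0 <= s <= 1 /\ Sol (Fxi F (path xi0 xi1 s)) KR x) t) as [xb [[Kxb Nxb] Happ]].
      + apply closed_and; auto. apply closed_norm_ge.
      + intros x [Hx _]; auto.
      + intros d Hd. destruct (Cl d Hd) as [s [Hs [Hs1 Hns]]].
        assert (Hps : simplex m (path xi0 xi1 s)) by (apply path_simplex; auto; lra).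
        destruct (exR _ Hps) as [x Hx]. exists s, x. split. rewrite Rabs_right; lra.
        split. split. apply Hx. destruct (Rle_dec R1 (vnorm x)) as [P|P]; auto. exfalso. apply Hns.
        exists x. apply (sol_interior n K _ R1 x HKcv Hx). lra.
        split; auto; lra.
      + assert (Hpt : simplex m (path xi0 xi1 t)) by (apply path_simplex; auto; lra).
        assert (Sol (Fxi F (path xi0 xi1 t)) KR xb).
        { apply lim_sol; auto. intros d e Hd He. destruct (Happ d e Hd He) as [s [x [H2 [[H3 _] [H4 H5]]]]]. exists s, x. auto. }
        pose proof (trunc _ Hpt At xb H). unfold R1 in Nxb. lra. }
  split; [|exact Hb].
  intros U V Uo Vo Hcov Hdis [xU [SU UU]] [xV [SV VV]].
  destruct (scalarize n m K F xU HKcv SU) as [xiU [HU0 HsU]].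
  destruct (scalarize n m K F xV HKcv SV) as [xiV [HV0 HsV]].
  assert (dich : forall xi, simplex m xi -> (forall x, Sol (Fxi F xi) K x -> U x) \/ (forall x, Sol (Fxi F xi) K x -> V x)).
  { intros xi Hs. destruct (classic (forall x, Sol (Fxi F xi) K x -> U x)) as [P|P]; [left; auto|right].
    intros b Sb. apply NNPP. intros nVb.
    assert (exists a, Sol (Fxi F xi) K a /\ ~ U a) as [a [Sa nUa]].
    { apply NNPP. intros C. apply P. intros x Sx. apply NNPP. intros C2. apply C. exists x; auto. }
    apply nUa. apply (segment_conn n (SolW F K) U V a b); auto.
    - intros r Hr. apply (Sol_SolW n m K F xi); auto.
      pose proof (sol_convex n K _ HKcv (Fxi_cont n m K F xi Hcont) (Hmx xi Hs)) as SC. apply SC; auto.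
    - destruct (Hcov b (Sol_SolW n m K F xi b Hs Sb)); auto. contradiction. }
  set (P := fun t => forall x, Sol (Fxi F (path xiU xiV t)) K x -> U x).
  assert (P1 : P 1).
  { apply (interval_conn P).
    - unfold P. rewrite path0. destruct (dich xiU HU0) as [H|H]; auto.
      exfalso. apply (Hdis xU); auto.
    - intros t Ht Hlt. unfold P.
      assert (Hpt : simplex m (path xiU xiV t)) by (apply path_simplex; auto; lra).
      destruct (dich _ Hpt) as [H|H]; auto. exfalso.
      destruct (cluster n R1 (fun x => KR x /\ vnorm x <= M)
                 (fun s x => (0 <= s <= 1 /\ Sol (Fxi F (path xiU xiV s)) KR x) /\ SolW F K x /\ U x) t) as [xb [[Kxb Nxb] Happ]].
      + apply closed_and; auto. apply closed_norm_le.
      + intros x [Hx _]; auto.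
      + intros d Hd. destruct (left_pt t d) as [Hs Hsd]; try lra.
        set (s := t - Rmin d t / 2) in *.
        assert (Hps : simplex m (path xiU xiV s)) by (apply path_simplex; auto; lra).
        destruct (Hb _ Hps) as [x Hx].
        exists s, x. split; auto. split. split. { split. apply Hx. unfold R1; pose proof (Hbound _ x Hps Hx); lra. }
        apply (Hbound _ x Hps Hx). split. split. lra. apply SolKR; auto. split. apply (Sol_SolW n m K F _ x Hps Hx).
        apply (Hlt s Hs x Hx).
      + assert (Sol (Fxi F (path xiU xiV t)) KR xb).
        { apply lim_sol; auto. intros d e Hd He. destruct (Happ d e Hd He) as [s [x [H2 [[H3 _] [[H4 _] H5]]]]]. exists s, x. auto. }
        assert (Vxb : V xb). { apply H. apply (sol_interior n K _ R1 xb HKcv H0). unfold R1; lra. }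
        destruct (Vo xb Vxb) as [eps [He Hv]].
        destruct (Happ 1 eps ltac:(lra) He) as [s [x [_ [_ [[_ [Sx Ux]] Hx]]]]].
        apply (Hdis x Sx Ux). apply Hv; auto.
    - intros t Ht At. apply NNPP. intros C.
      assert (Cl : forall d, 0 < d -> exists s, t < s < t + d /\ s <= 1 /\ ~ P s).
      { intros d Hd. apply NNPP. intros C2. apply C. exists d. split; auto. intros s Hs Hs1.
        apply NNPP. intros C3. apply C2. exists s. auto. }
      assert (Hpt : simplex m (path xiU xiV t)) by (apply path_simplex; auto; lra).
      destruct (cluster n R1 (fun x => KR x /\ vnorm x <= M)
                 (fun s x => (0 <= s <= 1 /\ Sol (Fxi F (path xiU xiV s)) KR x) /\ SolW F K x /\ V x) t) as [xb [[Kxb Nxb] Happ]].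
      + apply closed_and; auto. apply closed_norm_le.
      + intros x [Hx _]; auto.
      + intros d Hd. destruct (Cl d Hd) as [s [Hs [Hs1 Hns]]].
        assert (Hps : simplex m (path xiU xiV s)) by (apply path_simplex; auto; lra).
        destruct (Hb _ Hps) as [x Hx].
        assert (HV : forall x, Sol (Fxi F (path xiU xiV s)) K x -> V x).
        { destruct (dich _ Hps) as [H|H]; auto. contradiction. }
        exists s, x. split. rewrite Rabs_right; lra. split. split. { split. apply Hx. unfold R1; pose proof (Hbound _ x Hps Hx); lra. }
        apply (Hbound _ x Hps Hx). split. split. lra. apply SolKR; auto. split. apply (Sol_SolW n m K F _ x Hps Hx).
        auto.
      + assert (Sol (Fxi F (path xiU xiV t)) KR xb).
        { apply lim_sol; auto. intros d e Hd He. destruct (Happ d e Hd He) as [s [x [H2 [[H3 _] [[H4 _] H5]]]]]. exists s, x. auto. }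
        assert (Uxb : U xb). { apply At. apply (sol_interior n K _ R1 xb HKcv H). unfold R1; lra. }
        destruct (Uo xb Uxb) as [eps [He Hu]].
        destruct (Happ 1 eps ltac:(lra) He) as [s [x [_ [_ [[_ [Sx Vx]] Hx]]]]].
        apply (Hdis x Sx); auto. }
  unfold P in P1. rewrite path1 in P1. apply (Hdis xV SV); auto.
Qed.
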